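(* Let $q_1(\bar x,\mathrm{cntd}(y))\,{:}{-}\,A_1\wedge C_1$ and $q_2(\bar x,\mathrm{cntd}(y))\,{:}{-}\,A_2\wedge C_2$ be count-distinct queries. If $\mathrm{core}(q_1)$ and $\mathrm{core}(q_2)$ are isomorphic (via a bijection fixing every variable of $\bar x$ and $y$), then $q_1$ and $q_2$ are equivalent.
   Context: Fix a dense linearly ordered domain $\Delta$ of constants. A database instance is a finite set of facts over $\Delta$. A conjunctive query with comparisons (CQC) $q(\bar u)\,{:}{-}\,A\wedge C$ has distinguished variables $\bar u$, a finite set $A$ of relational atoms over variables and constants, and a finite set $C$ of comparisons $s\,\rho\,t$, $\rho\in\{=,<,\le\}$. $C\models s\,\rho\,t$ means every assignment to $\Delta$ satisfying $C$ satisfies $s\,\rho\,t$. A homomorphism $q_1\to_{\bar u}q_2$ is a map $h$ from terms of $q_1$ to terms of $q_2$, identity on constants and on $\bar u$, with $h(A_1)\subseteq A_2$ and $C_2\models h(r)\,\rho\,h(s)$ for all $r\,\rho\,s\in C_1$; an isomorphism is a bijection on variables fixing $\bar u$ and constants with $h(A_1)=A_2$, $h(C_1)=C_2$. $\mathrm{ext}(q)$ replaces $C$ by $\{r\,\rho\,s: r,s\text{ terms of }q,\ C\models r\,\rho\,s\}$. A core of $q$ is a CQC $q'$ with (1) $q\to_{\bar u}q'$; (2) for every $q''$ with $q\to_{\bar u}q''$ and $q''\to_{\bar u}q$ there is an injective homomorphism $q'\to_{\bar u}q''$; (3) $q'=\mathrm{ext}(q')$. A count-distinct query $q(\bar x,\mathrm{cntd}(y))\,{:}{-}\,A(\bar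 x,y,\bar z)\wedge C(\bar x,y,\bar z)$ ($y\notin\bar x$) returns on $I$, for each tuple $\bar d$ in the answer of the CQC $q(\bar x)\,{:}{-}\,A\wedge C$, the pair $(\bar d,k)$ with $k$ the number of distinct values $\theta(y)$ over all assignments $\theta$ with $\theta(A)\subseteq I$, $\theta$ satisfying $C$, and $\theta(\bar x)=\bar d$; two such queries are equivalent if they give the same output on all instances. $\mathrm{core}(q)$ is the core of the CQC $q(\bar x,y)\,{:}{-}\,A\wedge C$, read as a count-distinct query on $y$. *)

(* Defs.v *)
(* the domain Delta is an arbitrary totally ordered type. *)
From HB Require Import structures.
From mathcomp Require Import all_boot all_order.
From Stdlib Require List.
Set Implicit Arguments. Unset Strict Implicit. Unset Printing Implicit Defensive.
Import Order.TTheory.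
Local Open Scope order_scope.

Inductive rho := REq | RLt | RLe.

Section CQ.
Context {disp : Order.disp_t} {T : orderType disp}.

Definition term := (nat + T)%type.
Definition Var (v : nat) : term := inl v.
Definition Cst (a : T) : term := inr a.

(* relational atom: relation symbol (a nat) applied to a list of terms *)
Definition atom := (nat * seq term)%type.
Definition comp := (term * rho * term)%type.
(* database fact and instance (a finite set of facts, given as a list) *)
Definition fact := (nat * seq T)%type.
Definition instance := seq fact.

Record cqc := CQC { head : seq nat; atoms : seq atom; comps : seq comp }.

Definition eval (th : nat -> T) (t : term) : T :=
  match t with inl v => th v | inr a => a end.

Definition holds (th : nat -> T) (c : comp) : Prop :=
  let '(r, p, s) := c in
  match p with
  | REq => eval th r = eval th s
  | RLt => eval th r < eval th s
  | RLe => eval th r <= eval th s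
  end.

Definition entails (C : seq comp) (c : comp) : Prop :=
  forall th : nat -> T, (forall c', List.In c' C -> holds th c') -> holds th c.

Definition terms (q : cqc) : seq term :=
  map Var (head q) ++ flatten (map snd (atoms q))
  ++ flatten (map (fun c : comp => [:: c.1.1; c.2]) (comps q)).

Definition hterm (h : nat -> term) (t : term) : term :=
  match t with inl v => h v | inr a => inr a end.
Definition hatom (h : nat -> term) (a : atom) : atom := (a.1, map (hterm h) a.2).
Definition hcomp (h : nat -> term) (c : comp) : comp :=
  (hterm h c.1.1, c.1.2, hterm h c.2).

Definition hom (q1 q2 : cqc) (h : nat -> term) : Prop :=
  head q1 = head q2 /\
  (forall v, List.In v (head q1) -> h v = Var v) /\
  (forall a, List.In a (atoms q1) -> List.In (hatom h a) (atoms q2)) /\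
  (forall c, List.In c (comps q1) -> entails (comps q2) (hcomp h c)).

Definition homomorphic (q1 q2 : cqc) : Prop := exists h, hom q1 q2 h.

Definition inj_hom (q1 q2 : cqc) (h : nat -> term) : Prop :=
  hom q1 q2 h /\
  (forall t1 t2, List.In t1 (terms q1) -> List.In t2 (terms q1) ->
     hterm h t1 = hterm h t2 -> t1 = t2).

(* q = ext(q): C is (as a set) exactly the entailed comparisons among terms of q *)
Definition is_ext (q : cqc) : Prop :=
  forall c : comp, List.In c (comps q) <->
    (List.In c.1.1 (terms q) /\ List.In c.2 (terms q) /\ entails (comps q) c).

Definition is_core (q q' : cqc) : Prop :=
  homomorphic q q' /\
  (forall q'', homomorphic q q'' -> homomorphic q'' q ->
     exists h, inj_hom q' q'' h) /\
  is_ext q'.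

Definition rename (h : nat -> nat) : nat -> term := fun v => Var (h v).

Definition iso (q1 q2 : cqc) : Prop :=
  head q1 = head q2 /\
  exists h : nat -> nat, bijective h /\
    (forall v, List.In v (head q1) -> h v = v) /\
    (forall a, List.In a (atoms q2) <-> exists a1, List.In a1 (atoms q1) /\ hatom (rename h) a1 = a) /\
    (forall c, List.In c (comps q2) <-> exists c1, List.In c1 (comps q1) /\ hcomp (rename h) c1 = c).

Record cdq := CDQ { cd_x : seq nat; cd_y : nat; cd_atoms : seq atom; cd_comps : seq comp }.

Definition sat (A : seq atom) (C : seq comp) (I : instance) (th : nat -> T) : Prop :=
  (forall a, List.In a A -> List.In (a.1, map (eval th) a.2) I) /\ (forall c, List.In c C -> holds th c).

Definition cd_ans (q : cdq) (I : instance) (d : seq T) : Prop :=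
  exists th, sat (cd_atoms q) (cd_comps q) I th /\ map th (cd_x q) = d.

Definition cd_vals (q : cdq) (I : instance) (d : seq T) (v : T) : Prop :=
  exists th, sat (cd_atoms q) (cd_comps q) I th /\ map th (cd_x q) = d /\ th (cd_y q) = v.

(* equivalence: same output on all instances, i.e. same answer tuples and,
   for each answer tuple, the same number (cardinality) of distinct y-values *)
Definition cd_equiv (q1 q2 : cdq) : Prop :=
  forall (I : instance) (d : seq T),
    (cd_ans q1 I d <-> cd_ans q2 I d) /\
    (cd_ans q1 I d ->
       exists f : {v | cd_vals q1 I d v} -> {v | cd_vals q2 I d v}, bijective f).

Definition cd_cqc (q : cdq) : cqc := CQC (cd_x q ++ [:: cd_y q]) (cd_atoms q) (cd_comps q).

End CQ.

(* Main.v *)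
Require Import Defs.
From mathcomp Require Import all_boot all_order.
From Stdlib Require List.
From Stdlib Require Import ProofIrrelevance.
Set Implicit Arguments. Unset Strict Implicit.

Section S.
Context {disp : Order.disp_t} {T : orderType disp}.

Lemma map_In_ext (A B : Type) (f g : A -> B) (l : seq A) :
  (forall x, List.In x l -> f x = g x) -> map f l = map g l.
Proof.
elim: l => //= a l IH H; rewrite H; last by left.
by rewrite IH // => x Hx; apply: H; right.
Qed.

Lemma eval_h (th : nat -> T) h t :
  eval (fun v => eval th (h v)) t = eval th (hterm h t).
Proof. by case: t. Qed.

Lemma transfer (qa qb : @cqc disp T) h I th :
  hom qa qb h -> sat (atoms qb) (comps qb) I th ->
  exists th', sat (atoms qa) (comps qa) I th' /\ map th' (Defs.head qa) = map th (Defs.head qa).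
Proof.
move=> [Hh [Hv [Ha Hc]]] [Sa Sc].
exists (fun v => eval th (h v)); split; [split|].
- move=> a Hin; have := Sa _ (Ha _ Hin).
  rewrite /hatom /= -map_comp.
  have -> : map (eval th \o hterm h) a.2 = map (eval (fun v => eval th (h v))) a.2.
    by apply: eq_map => t; rewrite /= eval_h.
  by [].
- move=> c Hin; have := Hc _ Hin th Sc.
  case: c {Hin} => [[r p] s]; rewrite /hcomp /holds /= !eval_h; by case: p.
- by apply: map_In_ext => v Hin; rewrite Hv.
Qed.

Lemma id_hom (q : @cqc disp T) : hom q q Var.
Proof.
split; [by []|split; [by []|split]].
- move=> a Hin; suff -> : hatom Var a = a by [].
  case: a Hin => r l _; rewrite /hatom /=; congr pair.
  by rewrite -[RHS]map_id; apply: eq_map => -[].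
- move=> c Hin th Hth; apply: Hth.
  by case: c Hin => [[r p] s]; rewrite /hcomp /=; case: r; case: s.
Qed.

Lemma hterm_rename_comp (g h : nat -> nat) (t : @term disp T) :
  cancel h g -> @hterm disp T (rename g) (hterm (rename h) t) = t.
Proof. by move=> K; case: t => //= v; rewrite /rename /Var K. Qed.

Lemma iso_homs (c1 c2 : @cqc disp T) :
  iso c1 c2 -> exists h1 h2, hom c1 c2 h1 /\ hom c2 c1 h2.
Proof.
move=> [Hhd [h [[g K1 K2] [Hfix [HA HC]]]]].
exists (rename h), (rename g); split.
- split; [by []|split; [by move=> v Hv; rewrite /rename Hfix|split]].
  + by move=> a Hin; apply/HA; exists a.
  + by move=> cc Hin th Hth; apply: Hth; apply/HC; exists cc.
- split; [by []|split].
  + move=> v Hv; rewrite -Hhd in Hv; rewrite /rename.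
    by rewrite -{1}(Hfix v Hv) K1.
  split.
  + move=> a /HA [a1 [Hin <-]]; suff -> : hatom (rename g) (hatom (rename h) a1) = a1 by [].
    case: a1 {Hin} => r l; rewrite /hatom /=; congr pair.
    rewrite -map_comp -[RHS]map_id; apply: eq_map => t /=.
    by rewrite hterm_rename_comp.
  + move=> cc /HC [d1 [Hin <-]] th Hth; apply: Hth.
    suff -> : hcomp (rename g) (hcomp (rename h) d1) = d1 by [].
    case: d1 {Hin} => [[r p] s]; rewrite /hcomp /=.
    by rewrite !hterm_rename_comp.
Qed.

Lemma core_homs (q c : @cqc disp T) :
  is_core q c -> (exists h, hom q c h) /\ (exists h, hom c q h).
Proof.
move=> [[h Hh] [H2 _]]; split; first by exists h.
have [h' [Hh' _]] := H2 q (ex_intro _ Var (id_hom q)) (ex_intro _ Var (id_hom q)).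
by exists h'.
Qed.

Lemma hom_head (qa qb : @cqc disp T) h : hom qa qb h -> Defs.head qa = Defs.head qb.
Proof. by case. Qed.

Lemma dir (q1 q2 : @cdq disp T) (c1 c2 : @cqc disp T) :
  cd_x q1 = cd_x q2 -> cd_y q1 = cd_y q2 ->
  is_core (cd_cqc q1) c1 -> is_core (cd_cqc q2) c2 -> iso c1 c2 ->
  forall I th, sat (cd_atoms q1) (cd_comps q1) I th ->
  exists th', sat (cd_atoms q2) (cd_comps q2) I th' /\
    map th' (cd_x q2) = map th (cd_x q1) /\ th' (cd_y q2) = th (cd_y q1).
Proof.
move=> Hx Hy C1 C2 Is I th S.
have [[ha Ha] [hb Hb]] := core_homs C1.
have [[hc Hc] [hd Hd]] := core_homs C2.
have [he [hf [He Hf]]] := iso_homs Is.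
have [t1 [S1 E1]] := transfer Hb S.
have [t2 [S2 E2]] := transfer Hf S1.
have [t3 [S3 E3]] := transfer Hc S2.
exists t3; split; first exact: S3.
have HH1 := hom_head Hb. have HH2 := hom_head Hf. have HH3 := hom_head Hc.
rewrite /= in HH1 HH3.
have E : map t3 (cd_x q2 ++ [:: cd_y q2]) = map th (cd_x q1 ++ [:: cd_y q1]).
  have := E3; rewrite /= => ->; rewrite HH3 E2 HH2 E1 HH1; by [].
rewrite -Hx -Hy in E *.
rewrite !map_cat /= in E.
have := congr1 (take (size (cd_x q1))) E; rewrite !take_size_cat ?size_map // => ->.
split => //.
have := congr1 (drop (size (cd_x q1))) E; rewrite !drop_size_cat ?size_map //.
by case.
Qed.

End S.

Theorem mainTheorem6 (disp : Order.disp_t) (T : orderType disp)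
  (Hdense : forall a b : T, (a < b)%O -> exists c : T, (a < c)%O /\ (c < b)%O)
  (q1 q2 : @cdq disp T)
  (Hx : cd_x q1 = cd_x q2) (Hy : cd_y q1 = cd_y q2)
  (Hy1 : ~ List.In (cd_y q1) (cd_x q1))
  (c1 c2 : @cqc disp T) :
  is_core (cd_cqc q1) c1 -> is_core (cd_cqc q2) c2 -> iso c1 c2 ->
  cd_equiv q1 q2.
Proof.
move=> C1 C2 Is.
have Is' : iso c2 c1.
  move: Is => [Hh [h [[g K1 K2] [Hf [HA HC]]]]].
  split; first by [].
  exists g; split; first by exists h.
  split.
    move=> v Hv; rewrite -Hh in Hv; by rewrite -{1}(Hf v Hv) K1.
  split.
  - move=> a; split.
    + move=> Hin; exists (hatom (rename h) a); split; first by apply/HA; exists a.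
      case: a {Hin} => r l; rewrite /hatom /=; congr pair.
      rewrite -map_comp -[RHS]map_id; apply: eq_map => t /=.
      by rewrite hterm_rename_comp.
    + move=> [a1 [/HA [a0 [Hin E]] <-]]; rewrite -E.
      suff -> : hatom (rename g) (hatom (rename h) a0) = a0 by [].
      case: a0 {Hin E} => r l; rewrite /hatom /=; congr pair.
      rewrite -map_comp -[RHS]map_id; apply: eq_map => t /=.
      by rewrite hterm_rename_comp.
  - move=> c; split.
    + move=> Hin; exists (hcomp (rename h) c); split; first by apply/HC; exists c.
      case: c {Hin} => [[r p] s]; rewrite /hcomp /=.
      by rewrite !hterm_rename_comp.
    + move=> [a1 [/HC [a0 [Hin E]] <-]]; rewrite -E.
      suff -> : hcomp (rename g) (hcomp (rename h) a0) = a0 by [].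
      case: a0 {Hin E} => [[r p] s]; rewrite /hcomp /=.
      by rewrite !hterm_rename_comp.
have D1 := dir Hx Hy C1 C2 Is.
have D2 := dir (esym Hx) (esym Hy) C2 C1 Is'.
have V12 : forall I d v, cd_vals q1 I d v -> cd_vals q2 I d v.
  move=> I d v [th [S [E1 E2]]]; have [t [St [F1 F2]]] := D1 I th S.
  by exists t; rewrite F1 F2.
have V21 : forall I d v, cd_vals q2 I d v -> cd_vals q1 I d v.
  move=> I d v [th [S [E1 E2]]]; have [t [St [F1 F2]]] := D2 I th S.
  by exists t; rewrite F1 F2.
move=> I d; split.
  split.
  - move=> [th [S E]]; have [t [St [F1 _]]] := D1 I th S.
    by exists t; rewrite F1.
  - move=> [th [S E]]; have [t [St [F1 _]]] := D2 I th S.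
    by exists t; rewrite F1.
move=> _.
exists (fun s => exist _ (proj1_sig s) (V12 I d _ (proj2_sig s))).
exists (fun s => exist _ (proj1_sig s) (V21 I d _ (proj2_sig s))).
- move=> [v p] /=; by rewrite (proof_irrelevance _ (V21 _ _ _ _) p).
- move=> [v p] /=; by rewrite (proof_irrelevance _ (V12 _ _ _ _) p).
Qed.
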